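(* Consider any realization of a run of Algorithm 4 (described in the context). For every $k\in\mathcal{K}$, \[ m_k(x_k)-m_k(x_k+s_k)\ \ge\ \tfrac14\,\epsilon_H\,\|s_k\|^2 . \]
   Context: Let $f:\mathbb{R}^n\to\mathbb{R}$ be twice continuously differentiable with gradient $g=\nabla f$ and Hessian $H=\nabla^2f$; $\|\cdot\|$ is the Euclidean norm, $\lambda_{\min}$ the smallest eigenvalue, $\mathbb{S}^n$ the real symmetric $n\times n$ matrices. Write $f_k=f(x_k)$, $g_k=g(x_k)$, $H_k=H(x_k)$, $m_k(x)=f_k+g_k^T(x-x_k)+\tfrac12(x-x_k)^TH_k(x-x_k)$. Exact arithmetic is assumed. Algorithm 2 (truncated CG; inputs nonzero $g$, $H\in\mathbb{S}^n$, $\epsilon>0$, $\delta>0$, $\zeta\in(0,1)$, flag capCG, and $M\ge\|H\|$): $k_{\max}=\min\{n,\tfrac12\sqrt{\kappa}\ln(4\kappa^{3/2}/\zeta)\}$ with $\kappa=(M+2\epsilon)/\epsilon$ if capCG is true, else $k_{\max}=n$. Set $y_0=0,r_0=g,p_0=-g,j=0$. While $j<k_{\max}$: if $p_j^T(H+2\epsilon I)p_j\le\epsilon\|p_j\|^2$, return $s=y_j+\sigma p_j$ with $\sigma\ge0$, $\|s\|=\delta$, flag BND-NEG; set $\alpha_j=\|r_j\|^2/(p_j^T(H+2\epsilon I)p_j)$, $y_{j+1}=y_j+\alpha_jp_j$; if $\|y_{j+1}\|\ge\delta$, return $s=y_j+\sigma p_j$ with $\sigma\ge0$, $\|s\|=\delta$,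 flag BND-NORM; set $r_{j+1}=r_j+\alpha_j(H+2\epsilon I)p_j$; if $\|r_{j+1}\|\le\tfrac\zeta2\min\{\|g\|,\epsilon\|y_{j+1}\|\}$, return $s=y_{j+1}$, flag INT-RES; set $\beta_{j+1}=\|r_{j+1}\|^2/\|r_j\|^2$, $p_{j+1}=-r_{j+1}+\beta_{j+1}p_j$, $j\leftarrow j+1$. On loop exit return $s=y_j$, flag INT-MAX. Algorithm 3 (minimum eigenvalue oracle, MEO; inputs $g$, $H\in\mathbb{S}^n$, $\epsilon>0$, $\delta>0$, $\xi\in(0,1)$, $M\ge\|H\|$): a possibly randomized procedure that either returns $s=\pm\delta v$ with $\|v\|=1$, $v^THv\le-\epsilon/2$, satisfying $g^Ts\le0$, $s^THs\le-\tfrac12\epsilon\|s\|^2$, $\|s\|=\delta$, or returns an indication that $H\succeq-\epsilon I$. Algorithm 4 (inexact trust-region Newton-CG). Inputs: $\epsilon_g,\epsilon_H>0$; $\gamma_1\in(0,1)$, $\gamma_2\ge1$, $\psi\in(1/\gamma_2,1]$; $x_0$; $\delta_0>0$; $\delta_{\max}\ge\delta_0$; $\eta\in(0,1)$; $\zeta\in(0,1)$; $\xi\in[0,1)$; capCG; $M\ge L_g$. For $k=0,1,\dots$: evaluate $g_k,H_k$. If $g_k\ne0$, call Algorithm 2 with $(g_k,H_k,\epsilon_H,\delta_k,\zeta,\text{capCG},M)$ obtaining $s_k^{CG}$ and flag outCG; else set $s_k^{CG}=0$, outCG$=$INT-RES. If outCG$\in\{$BND-NEG, BND-NORM$\}$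 or ($\|g_k\|>\epsilon_g$ and outCG$=$INT-RES), set $s_k=s_k^{CG}$. Otherwise call Algorithm 3 with $(g_k,H_k,\epsilon_H,\delta_k,\xi,M)$; if it indicates $H_k\succeq-\epsilon_HI$, return $x_k$ (terminate), else take its output as $s_k$. Set $\rho_k=\frac{f_k-f(x_k+s_k)}{m_k(x_k)-m_k(x_k+s_k)}$. If $\rho_k\ge\eta$: $x_{k+1}=x_k+s_k$ and $\delta_{k+1}=\min\{\gamma_2\delta_k,\delta_{\max}\}$ if $\|s_k\|\ge\psi\delta_k$, else $\delta_{k+1}=\delta_k$. If $\rho_k<\eta$: $x_{k+1}=x_k$, $\delta_{k+1}=\gamma_1\|s_k\|$. $\mathcal{K}$ is the set of indices $k$ such that iteration $k$ is completed without termination (for the given realization). *)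

(* Defs.v *)
From HB Require Import structures.
From mathcomp Require Import all_boot all_order all_algebra.
From mathcomp Require Import all_classical all_reals all_analysis.
Set Implicit Arguments. Unset Strict Implicit. Unset Printing Implicit Defensive.
Import Order.TTheory GRing.Theory Num.Theory.
Import numFieldNormedType.Exports.
Local Open Scope ring_scope.

Section Defs.
Variable R : realType.
Variable n : nat.
Notation vec := 'cV[R]_n.
Notation mat := 'M[R]_n.

Definition dot (u v : vec) : R := (u^T *m v) 0 0.
Definition enorm (v : vec) : R := Num.sqrt (dot v v).
Definition qform (A : mat) (v : vec) : R := dot v (A *m v).

Definition symmetric_mx (A : mat) : Prop := A^T = A.

(* f is C^2 with gradient g and Hessian H (Frechet derivatives; all norms
   on R^n are equivalent so the max-norm topology of mathcomp-analysis is fine). *)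
Definition C2_grad_hess (f : vec -> R) (g : vec -> vec) (H : vec -> mat) : Prop :=
  (forall x, differentiable f x /\ forall v, ('d f x) v = dot (g x) v) /\
  (forall x, differentiable g x /\ forall v, ('d g x) v = H x *m v) /\
  continuous H.

Definition model (fk : R) (gk : vec) (Hk : mat) (xk x : vec) : R :=
  fk + dot gk (x - xk) + 2^-1 * qform Hk (x - xk).

Inductive cg_flag := BND_NEG | BND_NORM | INT_RES | INT_MAX.

Definition use_cg_step (out : cg_flag) (big_grad : bool) : bool :=
  match out with
  | BND_NEG | BND_NORM => true
  | INT_RES => big_grad
  | INT_MAX => false
  end.

Definition cg_kmax (eps zeta : R) (capCG : bool) (M : R) : R :=
  if capCG then
    let kappa := (M + 2 * eps) / eps in
    Num.min (n%:R) (2^-1 * Num.sqrt kappa * ln (4 * (kappa * Num.sqrt kappa) / zeta))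
  else n%:R.

Definition Hbar (H : mat) (eps : R) : mat := H + (2 * eps)%:M.

Definition cg_alpha (H : mat) (eps : R) (st : vec * vec * vec) : R :=
  let '(y, r, p) := st in enorm r ^+ 2 / qform (Hbar H eps) p.

Definition cg_next (H : mat) (eps : R) (st : vec * vec * vec) : vec * vec * vec :=
  let '(y, r, p) := st in
  let a := cg_alpha H eps st in
  let y' := y + a *: p in
  let r' := r + a *: (Hbar H eps *m p) in
  let b := enorm r' ^+ 2 / enorm r ^+ 2 in
  let p' := - r' + b *: p in
  (y', r', p').

Fixpoint cg_state (g : vec) (H : mat) (eps : R) (j : nat) : vec * vec * vec :=
  match j with
  | 0 => (0, g, - g)
  | j'.+1 => cg_next H eps (cg_state g H eps j')
  end.

Definition cg_continues (g : vec) (H : mat) (eps delta zeta : R) (capCG : bool)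
  (M : R) (j : nat) : Prop :=
  let '(y, r, p) := cg_state g H eps j in
  let '(y', r', _) := cg_state g H eps j.+1 in
  j%:R < cg_kmax eps zeta capCG M /\
  eps * enorm p ^+ 2 < qform (Hbar H eps) p /\
  enorm y' < delta /\
  Num.min (enorm g) (eps * enorm y') * (zeta / 2) < enorm r'.

Definition cg_returns (g : vec) (H : mat) (eps delta zeta : R) (capCG : bool)
  (M : R) (j : nat) (s : vec) (fl : cg_flag) : Prop :=
  let '(y, r, p) := cg_state g H eps j in
  let '(y', r', _) := cg_state g H eps j.+1 in
  let boundary := exists sigma : R, 0 <= sigma /\ s = y + sigma *: p /\ enorm s = delta in
  (cg_kmax eps zeta capCG M <= j%:R /\ s = y /\ fl = INT_MAX) \/
  (j%:R < cg_kmax eps zeta capCG M /\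
   (   (qform (Hbar H eps) p <= eps * enorm p ^+ 2 /\ boundary /\ fl = BND_NEG)
    \/ (eps * enorm p ^+ 2 < qform (Hbar H eps) p /\ delta <= enorm y' /\
        boundary /\ fl = BND_NORM)
    \/ (eps * enorm p ^+ 2 < qform (Hbar H eps) p /\ enorm y' < delta /\
        enorm r' <= (zeta / 2) * Num.min (enorm g) (eps * enorm y') /\
        s = y' /\ fl = INT_RES))).

(* (s, fl) is a possible output of Algorithm 2 on inputs (g, H, eps, delta, zeta, capCG, M) *)
Definition cg_output (g : vec) (H : mat) (eps delta zeta : R) (capCG : bool)
  (M : R) (s : vec) (fl : cg_flag) : Prop :=
  exists J : nat,
    (forall j, (j < J)%N -> cg_continues g H eps delta zeta capCG M j) /\
    cg_returns g H eps delta zeta capCG M J s fl.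

Definition meo_step (g : vec) (H : mat) (eps delta : R) (s : vec) : Prop :=
  exists v : vec,
    enorm v = 1 /\ qform H v <= - (eps / 2) /\
    (s = delta *: v \/ s = - (delta *: v)) /\
    dot g s <= 0 /\ qform H s <= - (eps / 2) * enorm s ^+ 2 /\ enorm s = delta.

Record tr_params := TrParams {
  eps_g : R; eps_H : R; gamma1 : R; gamma2 : R; psi : R;
  delta0 : R; delta_max : R; eta : R; zeta : R; xi : R; capCG : bool; Mc : R }.

Definition valid_params (P : tr_params) : Prop :=
  0 < eps_g P /\ 0 < eps_H P /\ 0 < gamma1 P < 1 /\ 1 <= gamma2 P /\
  (gamma2 P)^-1 < psi P <= 1 /\ 0 < delta0 P /\ delta0 P <= delta_max P /\
  0 < eta P < 1 /\ 0 < zeta P < 1 /\ 0 <= xi P < 1.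

(* The step-selection part of iteration k (from x_k, delta_k) when the iteration
   does not terminate: s is the step s_k. *)
Definition step_chosen (P : tr_params) (g : vec -> vec) (H : vec -> mat)
  (xk : vec) (dk : R) (s : vec) : Prop :=
  exists (sCG : vec) (out : cg_flag),
    (if g xk != 0 then cg_output (g xk) (H xk) (eps_H P) dk (zeta P) (capCG P) (Mc P) sCG out
     else sCG = 0 /\ out = INT_RES) /\
    (if use_cg_step out (eps_g P < enorm (g xk))
     then s = sCG
     else meo_step (g xk) (H xk) (eps_H P) dk s).

(* Iteration k terminates at (x_k, delta_k): MEO is called and indicates H_k >= -eps_H I. *)
Definition terminates (P : tr_params) (g : vec -> vec) (H : vec -> mat)
  (xk : vec) (dk : R) : Prop :=
  exists (sCG : vec) (out : cg_flag),
    (if g xk != 0 then cg_output (g xk) (H xk) (eps_H P) dk (zeta P) (capCG P) (Mc P) sCG out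
     else sCG = 0 /\ out = INT_RES) /\
    ~~ (use_cg_step out (eps_g P < enorm (g xk))).

Definition rho (f : vec -> R) (g : vec -> vec) (H : vec -> mat) (xk s : vec) : R :=
  (f xk - f (xk + s)) /
  (model (f xk) (g xk) (H xk) xk xk - model (f xk) (g xk) (H xk) xk (xk + s)).

Definition update (P : tr_params) (f : vec -> R) (g : vec -> vec) (H : vec -> mat)
  (xk : vec) (dk : R) (s : vec) (xk1 : vec) (dk1 : R) : Prop :=
  if eta P <= rho f g H xk s then
    xk1 = xk + s /\
    dk1 = (if psi P * dk <= enorm s then Num.min (gamma2 P * dk) (delta_max P) else dk)
  else xk1 = xk /\ dk1 = gamma1 P * enorm s.

(* K for a run terminating at iteration T (T = None: never terminates). *)
Definition in_K (T : option nat) (k : nat) : Prop :=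
  match T with None => True | Some t => (k < t)%N end.

Definition alg4_run (P : tr_params) (f : vec -> R) (g : vec -> vec) (H : vec -> mat)
  (x0 : vec) (x : nat -> vec) (d : nat -> R) (s : nat -> vec) (T : option nat) : Prop :=
  x 0%N = x0 /\ d 0%N = delta0 P /\
  (forall k, in_K T k ->
     step_chosen P g H (x k) (d k) (s k) /\
     update P f g H (x k) (d k) (s k) (x k.+1) (d k.+1)) /\
  (forall t, T = Some t -> terminates P g H (x t) (d t)).

End Defs.

(* Main.v *)
Require Import Defs.
From HB Require Import structures.
From mathcomp Require Import all_boot all_order all_algebra.
From mathcomp Require Import all_classical all_reals all_analysis.
From mathcomp Require Import ring lra.
Import Order.TTheory GRing.Theory Num.Theory.
Import numFieldNormedType.Exports.
Local Open Scope ring_scope.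


Lemma dotE (R : realType) n (u v : 'cV[R]_n) : dot u v = \sum_i u i 0 * v i 0.
Proof. rewrite /dot mxE; apply: eq_bigr => i _; by rewrite mxE. Qed.

Lemma dotC (R : realType) n (u v : 'cV[R]_n) : dot u v = dot v u.
Proof. rewrite !dotE; apply: eq_bigr => i _; by rewrite mulrC. Qed.

Lemma dotDl (R : realType) n (u v w : 'cV[R]_n) : dot (u + v) w = dot u w + dot v w.
Proof. rewrite !dotE -big_split; apply: eq_bigr => i _; by rewrite mxE mulrDl. Qed.

Lemma dotDr (R : realType) n (u v w : 'cV[R]_n) : dot w (u + v) = dot w u + dot w v.
Proof. by rewrite dotC dotDl !(@dotC _ _ w). Qed.

Lemma dotZl (R : realType) n a (u w : 'cV[R]_n) : dot (a *: u) w = a * dot u w.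
Proof. rewrite !dotE mulr_sumr; apply: eq_bigr => i _; by rewrite mxE mulrA. Qed.

Lemma dotZr (R : realType) n a (u w : 'cV[R]_n) : dot w (a *: u) = a * dot w u.
Proof. by rewrite dotC dotZl dotC. Qed.

Lemma dotNl (R : realType) n (u w : 'cV[R]_n) : dot (- u) w = - dot u w.
Proof. by rewrite -scaleN1r dotZl mulN1r. Qed.

Lemma dotNr (R : realType) n (u w : 'cV[R]_n) : dot w (- u) = - dot w u.
Proof. by rewrite -scaleN1r dotZr mulN1r. Qed.

Lemma dot0l (R : realType) n (w : 'cV[R]_n) : dot 0 w = 0.
Proof. by rewrite -(scale0r (0 : 'cV[R]_n)) dotZl mul0r. Qed.

Lemma dot0r (R : realType) n (w : 'cV[R]_n) : dot w 0 = 0.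
Proof. by rewrite dotC dot0l. Qed.

Lemma dot_ge0 (R : realType) n (u : 'cV[R]_n) : 0 <= dot u u.
Proof. rewrite dotE; apply: sumr_ge0 => i _; by rewrite -expr2 sqr_ge0. Qed.

Lemma dot_eq0 (R : realType) n (u : 'cV[R]_n) : dot u u = 0 -> u = 0.
Proof.
rewrite dotE => /eqP; rewrite psumr_eq0; last by move=> i _; by rewrite -expr2 sqr_ge0.
move=> /allP h; apply/matrixP => i j; rewrite ord1 mxE.
have := h i (mem_index_enum i); rewrite mulf_eq0 orbb => /eqP; done.
Qed.

Lemma enorm_sq (R : realType) n (u : 'cV[R]_n) : enorm u ^+ 2 = dot u u.
Proof. by rewrite /enorm sqr_sqrtr // dot_ge0. Qed.

Lemma dotA (R : realType) n (A : 'M[R]_n) (u v : 'cV[R]_n) : A^T = A ->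
  dot u (A *m v) = dot (A *m u) v.
Proof. move=> hA; rewrite /dot trmx_mul hA mulmxA //. Qed.

Lemma scalar_mulmx (R : realType) n (c : R) (v : 'cV[R]_n) : c%:M *m v = c *: v.
Proof. by rewrite mul_scalar_mx. Qed.

Set Implicit Arguments. Unset Strict Implicit.



Definition CGseq (R : realType) n (A : 'M[R]_n) (g : 'cV[R]_n)
  (Y Rr P : nat -> 'cV[R]_n) (a b : nat -> R) :=
  [/\ [/\ Y 0%N = 0, Rr 0%N = g & P 0%N = - g],
   forall j, [/\ Y j.+1 = Y j + a j *: P j, Rr j.+1 = Rr j + a j *: (A *m P j)
           & P j.+1 = - Rr j.+1 + b j *: P j],
   forall j, a j = dot (Rr j) (Rr j) / dot (P j) (A *m P j)
  & forall j, b j = dot (Rr j.+1) (Rr j.+1) / dot (Rr j) (Rr j)].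

Definition NDs (R : realType) n (A : 'M[R]_n) (Rr P : nat -> 'cV[R]_n) J :=
  forall i, (i < J)%N -> 0 < dot (P i) (A *m P i) /\ 0 < dot (Rr i) (Rr i).

Lemma NDs_le (R : realType) n (A : 'M[R]_n) Rr P J K :
  (K <= J)%N -> NDs A Rr P J -> NDs A Rr P K.
Proof. move=> hKJ h i hi; apply: h; exact: leq_trans hi hKJ. Qed.


Lemma cg_conj (R : realType) n (A : 'M[R]_n) g Y Rr P a b :
  A^T = A -> CGseq A g Y Rr P a b ->
  forall j, NDs A Rr P j -> forall i, (i < j)%N ->
    dot (Rr i) (Rr j) = 0 /\ dot (P i) (A *m P j) = 0.
Proof.
move=> hA [[hY0 hR0 hP0] hrec ha hb].
have RP : forall i, Rr i.+1 = - P i.+1 + b i *: P i.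
  by move=> i; have [_ _ ->] := hrec i; rewrite opprD opprK addrNK.
have RP0 : Rr 0%N = - P 0%N by rewrite hP0 hR0 opprK.
elim=> [|j IH] hND i //.
have NDj : NDs A Rr P j by apply: NDs_le hND.
have [pAp rr] := hND j (ltnSn j).
have [rY rR rP] := hrec j.
have IHj := IH NDj.
have rAp : forall i, (i < j)%N -> dot (Rr i) (A *m P j) = 0.
  case=> [|i'] hi.
    by rewrite RP0 dotNl (proj2 (IHj 0%N hi)) oppr0.
  rewrite RP dotDl dotNl dotZl (proj2 (IHj _ hi)) (proj2 (IHj i' _)) ?mulr0 ?oppr0 ?addr0 //.
  exact: ltnW.
have rApj : dot (Rr j) (A *m P j) = - dot (P j) (A *m P j).
  case: j {IH hND NDj pAp rr rY rR rP} IHj rAp => [|j'] IHj rAp.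
    by rewrite RP0 dotNl.
  by rewrite RP dotDl dotNl dotZl (proj2 (IHj j' (ltnSn _))) mulr0 addr0.
have aE : a j * dot (P j) (A *m P j) = dot (Rr j) (Rr j).
  by rewrite ha divfK // gt_eqF.
have part1 : forall i, (i <= j)%N -> dot (Rr i) (Rr j.+1) = 0.
  move=> i'; rewrite leq_eqVlt => /orP [/eqP -> | hi].
    by rewrite rR dotDr dotZr rApj mulrN aE subrr.
  by rewrite rR dotDr dotZr rAp // (proj1 (IHj _ hi)) mulr0 addr0.
move=> hi; split; first exact: part1 i hi.
have ane : forall k, (k < j.+1)%N -> a k != 0.
  move=> k hk; have [h1 h2] := hND k hk.
  by rewrite ha mulf_neq0 ?invr_eq0 // gt_eqF.
have key : forall k, a k * dot (A *m P k) (Rr j.+1) =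
    dot (Rr k.+1) (Rr j.+1) - dot (Rr k) (Rr j.+1).
  move=> k; have [_ hRk _] := hrec k.
  by rewrite -dotZl hRk dotDl addrAC subrr add0r.
rewrite rP mulmxDr mulmxN -scalemxAr dotDr dotNr dotZr dotA //.
move: hi; rewrite ltnS leq_eqVlt => /orP [/eqP -> | hi].
  have e1 : a j * dot (A *m P j) (Rr j.+1) = a j * (b j * dot (P j) (A *m P j)).
    rewrite key (part1 j (leqnn j)) subr0 ha hb; field.
    by rewrite !gt_eqF.
  by rewrite (mulfI (ane j (ltnSn j)) e1) addNr.
have e1 : a i * dot (A *m P i) (Rr j.+1) = a i * 0.
  by rewrite key !part1 ?subrr ?mulr0 // ltnW.
rewrite (mulfI (ane i (ltnW hi)) e1) (proj2 (IHj _ hi)) mulr0 oppr0 addr0 //.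
Qed.



Lemma cg_facts (R : realType) n (A : 'M[R]_n) g Y Rr P a b :
  A^T = A -> CGseq A g Y Rr P a b ->
  [/\ forall j, Rr j = A *m Y j + g,
      forall k, NDs A Rr P k -> forall j, (j <= k)%N -> dot (Y j) (A *m P k) = 0,
      forall k, NDs A Rr P k -> forall j, (j <= k)%N -> dot (Y j) (Rr k) = 0,
      forall j, NDs A Rr P j -> dot (Rr j) (P j) = - dot (Rr j) (Rr j)
    & forall j, NDs A Rr P j -> 0 <= dot (Y j) (A *m Y j) /\ 0 <= dot (Y j) (P j)].
Proof.
move=> hA hCG; have conj := cg_conj hA hCG.
case: hCG => [[hY0 hR0 hP0] hrec ha hb].
have F1 : forall j, Rr j = A *m Y j + g.
  elim=> [|j IH]; first by rewrite hR0 hY0 mulmx0 add0r.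
  have [rY rR _] := hrec j.
  by rewrite rR rY IH mulmxDr -scalemxAr addrAC.
have F2 : forall k, NDs A Rr P k -> forall i, (i < k)%N -> dot (Rr k) (P i) = 0.
  move=> k hk; elim=> [|i IH] hi.
    by rewrite hP0 -hR0 dotNr dotC (proj1 (conj _ hk _ hi)) oppr0.
  have [_ _ ->] := hrec i.
  rewrite dotDr dotNr dotZr IH ?(ltnW hi) // dotC (proj1 (conj _ hk _ hi)).
  by rewrite oppr0 mulr0 addr0.
have F5 : forall k, NDs A Rr P k -> forall j, (j <= k)%N -> dot (Y j) (A *m P k) = 0.
  move=> k hk; elim=> [|j IH] hj; first by rewrite hY0 dot0l.
  have [-> _ _] := hrec j.
  by rewrite dotDl dotZl IH ?(ltnW hj) // (proj2 (conj _ hk _ hj)) mulr0 addr0.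
have F3 : forall k, NDs A Rr P k -> forall j, (j <= k)%N -> dot (Y j) (Rr k) = 0.
  move=> k hk; elim=> [|j IH] hj; first by rewrite hY0 dot0l.
  have [-> _ _] := hrec j.
  by rewrite dotDl dotZl IH ?(ltnW hj) // dotC F2 // mulr0 addr0.
have aP : forall j, NDs A Rr P j.+1 -> 0 <= a j.
  move=> j hj; have [h1 h2] := hj j (ltnSn j).
  by rewrite ha divr_ge0 // ltW.
have bP : forall j, 0 <= b j by move=> j; rewrite hb divr_ge0 // dot_ge0.
split => //.
  case=> [|j] hj; first by rewrite hP0 -hR0 dotNr.
  have [_ _ ->] := hrec j.
  by rewrite dotDr dotNr dotZr F2 // mulr0 addr0.
elim=> [|j IH] hj; first by rewrite hY0 !dot0l; split.
have hj' : NDs A Rr P j by apply: NDs_le hj.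
have [IH1 IH2] := IH hj'.
have [pAp _] := hj j (ltnSn j).
have [rY rR rP] := hrec j.
split.
  rewrite rY mulmxDr -scalemxAr !dotDl !dotDr !dotZl !dotZr F5 //.
  have e : dot (P j) (A *m Y j) = 0 by rewrite dotA // dotC F5.
  rewrite e !mulr0 !addr0 add0r.
  apply: addr_ge0 => //; apply: mulr_ge0; first exact: aP.
  by apply: mulr_ge0; [exact: aP | exact: ltW].
rewrite rP dotDr dotNr F3 // oppr0 add0r dotZr rY dotDl dotZl.
apply: mulr_ge0 => //; apply: addr_ge0 => //.
by apply: mulr_ge0; [exact: aP | exact: dot_ge0].
Qed.



Definition goodstep (R : realType) n (A : 'M[R]_n) (g s : 'cV[R]_n) (eps : R) :=
  4^-1 * eps * dot s s <= - dot g s - 2^-1 * (dot s (A *m s) - 2 * eps * dot s s).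

Lemma cg_intres (R : realType) n (A : 'M[R]_n) g Y Rr P a b eps J :
  A^T = A -> CGseq A g Y Rr P a b -> 0 < eps -> NDs A Rr P J.+1 ->
  goodstep A g (Y J.+1) eps.
Proof.
move=> hA hCG he hND.
have [F1 F5 F3 F4 F6] := cg_facts hA hCG.
have hg : g = Rr J.+1 - A *m Y J.+1 by rewrite F1 addrAC subrr add0r.
have e1 : dot g (Y J.+1) = - dot (Y J.+1) (A *m Y J.+1).
  by rewrite hg dotDl dotNl dotC F3 // add0r dotC.
have [h1 _] := F6 _ hND.
have h2 := dot_ge0 _ _ (Y J.+1).
have h3 : 0 <= eps * dot (Y J.+1) (Y J.+1) by apply: mulr_ge0 => //; exact: ltW.
rewrite /goodstep e1; lra.
Qed.

Lemma cg_bnd (R : realType) n (A : 'M[R]_n) g Y Rr P a b eps J sigma :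
  A^T = A -> CGseq A g Y Rr P a b -> 0 < eps -> NDs A Rr P J -> 0 <= sigma ->
  (dot (P J) (A *m P J) <= eps * dot (P J) (P J) \/
   (eps * dot (P J) (P J) < dot (P J) (A *m P J) /\
    dot (Y J + sigma *: P J) (Y J + sigma *: P J) <= dot (Y J.+1) (Y J.+1))) ->
  goodstep A g (Y J + sigma *: P J) eps.
Proof.
move=> hA hCG he hND hs hcase.
have [F1 F5 F3 F4 F6] := cg_facts hA hCG.
set y := Y J; set p := P J; set r := Rr J.
have hg : g = r - A *m y by rewrite /r F1 addrAC subrr add0r.
have yAp : dot y (A *m p) = 0 by apply: F5.
have ry : dot r y = 0 by rewrite dotC; apply: F3.
have rp : dot r p = - dot r r by apply: F4.
have [Y2 yp] := F6 _ hND.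
have e1 : dot g (y + sigma *: p) = - dot y (A *m y) - sigma * dot r r.
  rewrite hg !dotDl !dotDr !dotNl !dotZr ry rp.
  rewrite (dotC _ _ (A *m y) y) -(dotA _ _ _ _ _ hA) yAp; lra.
have e2 : dot (y + sigma *: p) (A *m (y + sigma *: p)) =
    dot y (A *m y) + sigma ^+ 2 * dot p (A *m p).
  rewrite mulmxDr -scalemxAr !dotDl !dotDr !dotZl !dotZr yAp.
  rewrite (dotA _ _ _ p y hA) (dotC _ _ (A *m p) y) yAp expr2; lra.
have e3 : dot (y + sigma *: p) (y + sigma *: p) =
    dot y y + 2 * sigma * dot y p + sigma ^+ 2 * dot p p.
  rewrite !dotDl !dotDr !dotZl !dotZr (dotC _ _ p y) expr2; lra.
have hyy := dot_ge0 _ _ y; have hpp := dot_ge0 _ _ p; have hrr := dot_ge0 _ _ r.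
have k1 : 0 <= eps * dot y y by apply: mulr_ge0 => //; exact: ltW.
have k2 : 0 <= eps * (sigma * dot y p) by apply: mulr_ge0 => //; [exact: ltW | exact: mulr_ge0].
have k3 : 0 <= eps * (sigma ^+ 2 * dot p p) by apply: mulr_ge0 => //; [exact: ltW | apply: mulr_ge0; rewrite ?sqr_ge0].
have k4 : 0 <= sigma * dot r r by exact: mulr_ge0.
rewrite /goodstep e1 e2 e3.
case: hcase => [hneg | [hpos hnorm]].
  have k5 : sigma ^+ 2 * dot p (A *m p) <= sigma ^+ 2 * (eps * dot p p).
    by apply: ler_wpM2l; rewrite ?sqr_ge0.
  lra.
case: hCG => [_ hrec ha _].
have [rY _ _] := hrec J.
have pAp0 : 0 < dot p (A *m p) by apply: le_lt_trans hpos; apply: mulr_ge0 => //; exact: ltW.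
have pp0 : 0 < dot p p.
  rewrite lt_def hpp andbT; apply/eqP => /dot_eq0 p0.
  by move: pAp0; rewrite p0 dot0l ltxx.
have al0 : 0 <= a J by rewrite ha divr_ge0 // ltW.
have aE : a J * dot p (A *m p) = dot r r by rewrite ha divfK // gt_eqF.
have ey1 : dot (Y J.+1) (Y J.+1) = dot y y + 2 * a J * dot y p + a J ^+ 2 * dot p p.
  rewrite rY !dotDl !dotDr !dotZl !dotZr (dotC _ _ p y) expr2 -/y -/p; lra.
have sa : sigma <= a J.
  rewrite leNgt; apply/negP => hlt.
  have : 0 < (sigma - a J) * (2 * dot y p + (sigma + a J) * dot p p).
    apply: mulr_gt0; first by rewrite subr_gt0.
    have : 0 < (sigma + a J) * dot p p by apply: mulr_gt0 => //; lra.
    lra.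
  move: hnorm; rewrite e3 ey1 -/y -/p => hn h.
  have : (sigma - a J) * (2 * dot y p + (sigma + a J) * dot p p) =
     (dot y y + 2 * sigma * dot y p + sigma ^+ 2 * dot p p) -
     (dot y y + 2 * a J * dot y p + a J ^+ 2 * dot p p) by rewrite !expr2; ring.
  lra.
have k6 : 0 <= sigma * dot p (A *m p) * (a J - sigma / 2).
  apply: mulr_ge0; first by apply: mulr_ge0 => //; exact: ltW.
  lra.
have : sigma * dot r r - 2^-1 * (sigma ^+ 2 * dot p (A *m p)) =
   sigma * dot p (A *m p) * (a J - sigma / 2) by rewrite -aE expr2; ring.
lra.
Qed.



Definition cgY (R : realType) n (g : 'cV[R]_n) H0 eps j := (cg_state g H0 eps j).1.1.
Definition cgR (R : realType) n (g : 'cV[R]_n) H0 eps j := (cg_state g H0 eps j).1.2.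
Definition cgP (R : realType) n (g : 'cV[R]_n) H0 eps j := (cg_state g H0 eps j).2.
Definition cga (R : realType) n (g : 'cV[R]_n) H0 eps j :=
  dot (cgR g H0 eps j) (cgR g H0 eps j) /
  dot (cgP g H0 eps j) (Hbar H0 eps *m cgP g H0 eps j).
Definition cgb (R : realType) n (g : 'cV[R]_n) H0 eps j :=
  dot (cgR g H0 eps j.+1) (cgR g H0 eps j.+1) / dot (cgR g H0 eps j) (cgR g H0 eps j).

Lemma cg_stateE (R : realType) n (g : 'cV[R]_n) H0 eps j :
  cg_state g H0 eps j = (cgY g H0 eps j, cgR g H0 eps j, cgP g H0 eps j).
Proof. by rewrite /cgY /cgR /cgP; case: (cg_state g H0 eps j) => [[? ?] ?]. Qed.

Lemma cg_CGseq (R : realType) n (g : 'cV[R]_n) H0 eps :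
  CGseq (Hbar H0 eps) g (cgY g H0 eps) (cgR g H0 eps) (cgP g H0 eps)
    (cga g H0 eps) (cgb g H0 eps).
Proof.
split => // j.
rewrite /cgb /cga /cgY /cgR /cgP /=.
case: (cg_state g H0 eps j) => [[y r] p] /=.
by rewrite /cg_alpha /qform !enorm_sq.
Qed.

Lemma Hbar_sym (R : realType) n (H0 : 'M[R]_n) eps :
  H0^T = H0 -> (Hbar H0 eps)^T = Hbar H0 eps.
Proof. by move=> h; rewrite /Hbar linearD /= tr_scalar_mx h. Qed.

Lemma model_dec (R : realType) n fk (gk : 'cV[R]_n) Hk xk s :
  model fk gk Hk xk xk - model fk gk Hk xk (xk + s) = - dot gk s - 2^-1 * qform Hk s.
Proof.
rewrite /model.
have -> : xk + s - xk = s by rewrite addrC addKr.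
rewrite subrr /qform mulmx0 !dot0r; ring.
Qed.

Lemma good_to (R : realType) n (Hk : 'M[R]_n) gk s eps :
  goodstep (Hbar Hk eps) gk s eps ->
  4^-1 * eps * dot s s <= - dot gk s - 2^-1 * qform Hk s.
Proof.
rewrite /goodstep /qform /Hbar mulmxDl mul_scalar_mx dotDr dotZr.
have -> : dot s (Hk *m s) + 2 * eps * dot s s - 2 * eps * dot s s = dot s (Hk *m s) by ring.
done.
Qed.

Lemma meo_good (R : realType) n (Hk : 'M[R]_n) gk s eps dk :
  meo_step gk Hk eps dk s ->
  4^-1 * eps * dot s s <= - dot gk s - 2^-1 * qform Hk s.
Proof.
move=> [v [_ [_ [_ [h1 [h2 _]]]]]]; rewrite enorm_sq in h2; lra.
Qed.

Lemma cont_ND (R : realType) n (g : 'cV[R]_n) H0 eps delta zeta capCG M J :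
  g != 0 -> 0 < eps -> 0 < zeta ->
  (forall j, (j < J)%N -> cg_continues g H0 eps delta zeta capCG M j) ->
  (forall i, (i <= J)%N -> 0 < dot (cgR g H0 eps i) (cgR g H0 eps i)) /\
  NDs (Hbar H0 eps) (cgR g H0 eps) (cgP g H0 eps) J.
Proof.
move=> gnz he hz hc.
have rr : forall i, (i <= J)%N -> 0 < dot (cgR g H0 eps i) (cgR g H0 eps i).
  case=> [|i] hi.
    rewrite lt_def dot_ge0 andbT; apply/eqP => /dot_eq0 h.
    by move: h gnz; rewrite /cgR /= => ->; rewrite eqxx.
  have := hc i hi; rewrite /cg_continues !cg_stateE; cbv iota beta.
  move=> [_ [_ [_ h]]].
  have h0 : 0 <= Num.min (enorm g) (eps * enorm (cgY g H0 eps i.+1)) * (zeta / 2).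
    apply: mulr_ge0; last by apply: divr_ge0; [exact: ltW|].
    rewrite le_min /enorm sqrtr_ge0 /=; apply: mulr_ge0; [exact: ltW | exact: sqrtr_ge0].
  rewrite -enorm_sq; apply: exprn_gt0; exact: le_lt_trans h0 h.
split => // i hi; split; last exact: rr (ltnW hi).
have := hc i hi; rewrite /cg_continues !cg_stateE; cbv iota beta.
move=> [_ [h _]]; move: h; rewrite /qform enorm_sq => h.
apply: le_lt_trans h; apply: mulr_ge0; [exact: ltW | exact: dot_ge0].
Qed.

Theorem lemma4p1 (R : realType) (n : nat) (P : tr_params R)
  (f : 'cV[R]_n -> R) (g : 'cV[R]_n -> 'cV[R]_n) (H : 'cV[R]_n -> 'M[R]_n)
  (Lg : R) (x0 : 'cV[R]_n) (x : nat -> 'cV[R]_n) (d : nat -> R)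
  (s : nat -> 'cV[R]_n) (T : option nat) :
  valid_params P ->
  C2_grad_hess f g H ->
  (forall y, symmetric_mx (H y)) ->
  (forall y z, enorm (g y - g z) <= Lg * enorm (y - z)) ->
  Lg <= Mc P ->
  alg4_run P f g H x0 x d s T ->
  forall k, in_K T k ->
    model (f (x k)) (g (x k)) (H (x k)) (x k) (x k)
      - model (f (x k)) (g (x k)) (H (x k)) (x k) (x k + s k)
    >= 4^-1 * eps_H P * enorm (s k) ^+ 2.
Proof.
move=> hP _ hsym _ _ [_ [_ [hstep _]]] k hk.
have [heg [heH [_ [_ [_ [_ [_ [_ [/andP [hz0 _] _]]]]]]]]] := hP.
rewrite model_dec enorm_sq.
have [hsc _] := hstep k hk.
have hA := Hbar_sym (eps_H P) (hsym (x k)).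
case: hsc => sCG [out [hcg hsel]].
move: hsel; case hu: (use_cg_step out (eps_g P < enorm (g (x k)))) => hsel;
  last exact: meo_good hsel.
subst sCG.
move: hcg; case: ifP => [gnz | /negbFE/eqP g0] hcg; last first.
  case: hcg => _ hout; move: hu; rewrite hout /= g0 /enorm dot0r sqrtr0.
  by rewrite ltNge (ltW heg).
case: hcg => J [hcont hret].
have [rr hND] := cont_ND gnz heH hz0 hcont.
apply: good_to.
have hCG := cg_CGseq (g (x k)) (H (x k)) (eps_H P).
move: hret; rewrite /cg_returns !cg_stateE; cbv iota beta.
case=> [[_ [_ hout]] | [_ hc]]; first by move: hu; rewrite hout.
case: hc => [[hq [[sig [hs0 [hs _]]] _]] | [[hq [hd [[sig [hs0 [hs hn]]] _]]] | [hq [_ [_ [hs _]]]]]].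
- rewrite hs; apply: (cg_bnd hA hCG) => //.
  by left; move: hq; rewrite /qform enorm_sq.
- rewrite hs; apply: (cg_bnd hA hCG) => //.
  right; split; first by move: hq; rewrite /qform enorm_sq.
  rewrite -!enorm_sq -hs; move: hd; rewrite -hn => hd.
  have h0 : 0 <= enorm (s k) by exact: sqrtr_ge0.
  nra.
- rewrite hs; apply: (cg_intres hA hCG) => //.
  move=> i; rewrite ltnS leq_eqVlt => /orP [/eqP -> | hi]; last exact: hND.
  split; last exact: rr.
  apply: le_lt_trans hq; apply: mulr_ge0; [exact: ltW | rewrite enorm_sq; exact: dot_ge0].
Qed.
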